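(* Consider the analog decentralized learning protocol described in the context, with arbitrary step sizes $\eta^{(t)}>0$, $\zeta^{(t)}\ge 0$ and arbitrary transmit powers $P^{(t)}>0$. Then for every iteration $t\ge 0$ and every device $i\in\mathcal{V}$, the analog consensus update $$\boldsymbol\theta_i^{(t+1)}=\boldsymbol\theta_i^{(t+1/2)}+\zeta^{(t)}\big(w_{ii}\hat{\boldsymbol\theta}_i^{(t+1)}+\hat{\boldsymbol y}_i^{(t+1)}-\hat{\boldsymbol\theta}_i^{(t+1)}\big)$$ is equivalent to $$\boldsymbol\theta_i^{(t+1)}=\boldsymbol\theta_i^{(t+1/2)}+\zeta^{(t)}\sum_{j\in\mathcal{N}_i\cup\{i\}}w_{ij}\big(\hat{\boldsymbol\theta}_j^{(t+1)}-\hat{\boldsymbol\theta}_i^{(t+1)}\big)+\zeta^{(t)}\sum_{\tau=0}^{t}\frac{m}{d}(\boldsymbol A^{(\tau)})^T\tilde{\boldsymbol n}_i^{(\tau)},$$ where $\tilde{\boldsymbol n}_i^{(\tau)}\in\mathbb{R}^{m}$ is an effective noise vector which (conditionally on the fading coefficients and on the vectors $\boldsymbol u_j^{(\tau)}$) is distributed as $\mathcal{N}(\boldsymbol 0,\tilde N_{0i}^{(\tau)}\boldsymbol I)$ with $$\tilde N_{0i}^{(t)}=\frac{1}{2}\frac{N_0}{NP^{(t)}}\Bigg(\sum_{s\in\mathcal{S}_i^{\rm AR}}\max_{j\in\mathcal{N}_i^{(s)}}\Big\{|\mathcal{S}_j^{\rm Tx}|\,w_{ij}^2\frac{\|\boldsymbol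 u_j^{(t)}\|^2}{|h_{ij}^{\prime(t)}|^2}\Big\}+\sum_{s\in\mathcal{S}_i^{\rm BR}}|\mathcal{S}_{j_s}^{\rm Tx}|\,w_{ij_s}^2\frac{\|\boldsymbol u_{j_s}^{(t)}\|^2}{|h_{ij_s}^{\prime(t)}|^2}\Bigg),$$ with $\boldsymbol u_j^{(t)}=\boldsymbol\theta_j^{(t+1/2)}-\hat{\boldsymbol\theta}_j^{(t)}$ and $j_s$ the (unique) neighbor of $i$ broadcasting to $i$ in slot $s\in\mathcal{S}_i^{\rm BR}$.
   Context: Setting. $K$ devices $\mathcal{V}=\{1,\dots,K\}$ form a connected undirected graph $\mathcal{G}(\mathcal{V},\mathcal{E})$; $\mathcal{N}_i$ is the neighbor set of $i$. $\boldsymbol W=\boldsymbol W^T\in\mathbb{R}^{K\times K}$ is a doubly stochastic mixing matrix with entries $w_{ij}\ge 0$, $w_{ij}=0$ if $j\notin\mathcal{N}_i\cup\{i\}$, and $\|\boldsymbol W-\boldsymbol 1\boldsymbol 1^T/K\|_2<1$. Each device $i$ has a local function $f_i:\mathbb{R}^d\to\mathbb{R}$ and a stochastic (mini-batch) gradient $\hat\nabla f_i$. Compression (random linear coding). Let $m\le d$ and $\boldsymbol H\in\{\pm1\}^{m\times d}$ with $\frac1d\boldsymbol H\boldsymbol H^T=\boldsymbol I$. For each iteration $t$, $\boldsymbol A^{(t)}=\frac{1}{\sqrt m}\boldsymbol H\boldsymbol R^{(t)}$ where $\boldsymbol R^{(t)}$ is diagonal with i.i.d. entries uniform on $\{\pm1\}$,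 shared by all devices. Channels. For $(i,j)\in\mathcal{E}$, $h_{ij}^{\prime(t)}\in\mathbb{C}\setminus\{0\}$ is the channel coefficient between $i$ and $j$ in iteration $t$ (constant within the iteration). Each iteration uses a communication block of $N$ channel uses split into $M=2n$ slots of $m=N/M$ channel uses each; each device has energy budget $NP^{(t)}$ per block. Received noise vectors $\boldsymbol n_j^{(t,s)}\sim\mathcal{CN}(\boldsymbol 0,N_0\boldsymbol I_m)$ are i.i.d. over devices, slots and iterations, independent of everything else. Schedule. Each device $i$ has disjoint sets of odd slots $\mathcal{S}_i^{\rm AT}$ (transmit in AirComp mode), $\mathcal{S}_i^{\rm AR}$ (receive in AirComp mode, as a center node), and even slots $\mathcal{S}_i^{\rm BT}$ (broadcast), $\mathcal{S}_i^{\rm BR}$ (receive a broadcast); $\mathcal{S}_i^{\rm Tx}=\mathcal{S}_i^{\rm AT}\cup\mathcal{S}_i^{\rm BT}$. For $s\in\mathcal{S}_j^{\rm AR}$, $\mathcal{N}_j^{(s)}\subseteq\mathcal{N}_j$ is the set of neighbors of $j$ transmitting to $j$ in AirComp mode in slot $s$; for $s\in\mathcal{S}_j^{\rm BR}$ there is exactly one neighbor $i_s\in\mathcal{N}_j$ broadcasting to $j$ in slot $s$. For each $j$, the sets $\mathcal{N}_j^{(s)}$ ($s\in\mathcal{S}_j^{\rm AR}$) and the singletons $\{i_s\}$ ($s\in\mathcal{S}_j^{\rm BR}$) partition $\mathcal{N}_j$. Protocol. Initialize $\boldsymbol\theta_i^{(0)}$ arbitrary, $\hat{\boldsymbol\theta}_i^{(0)}=\boldsymbol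 0$, $\hat{\boldsymbol y}_i^{(0)}=\boldsymbol 0$. At iteration $t$: (1) $\boldsymbol\theta_i^{(t+1/2)}=\boldsymbol\theta_i^{(t)}-\eta^{(t)}\hat\nabla f_i(\boldsymbol\theta_i^{(t)})$ and $\boldsymbol u_i^{(t)}=\boldsymbol\theta_i^{(t+1/2)}-\hat{\boldsymbol\theta}_i^{(t)}$. (2) Odd slot $s\in\mathcal{S}_j^{\rm AR}$: each $i\in\mathcal{N}_j^{(s)}$ sends $\boldsymbol x_{ij}^{(t,s)}=\frac{\sqrt{\gamma_j^{(t,s)}}}{h_{ij}^{\prime(t)}}w_{ji}\boldsymbol A^{(t)}\boldsymbol u_i^{(t)}$, $j$ receives $\boldsymbol y_j^{(t,s)}=\sqrt{\gamma_j^{(t,s)}}\sum_{i\in\mathcal{N}_j^{(s)}}w_{ji}\boldsymbol A^{(t)}\boldsymbol u_i^{(t)}+\boldsymbol n_j^{(t,s)}$ and forms $\hat{\boldsymbol y}_j^{(t,s)}=\frac md(\boldsymbol A^{(t)})^T\Re\{\boldsymbol y_j^{(t,s)}/\sqrt{\gamma_j^{(t,s)}}\}$. (3) Even slot $s\in\mathcal{S}_i^{\rm BT}$: $i$ sends $\boldsymbol x_i^{(t,s)}=\sqrt{\alpha_i^{(t,s)}}\boldsymbol A^{(t)}\boldsymbol u_i^{(t)}$; each receiving neighbor $j$ gets $\boldsymbol y_{ij}^{(t,s)}=\sqrt{\alpha_i^{(t,s)}}h_{ij}^{\prime(t)}\boldsymbol A^{(t)}\boldsymbol u_i^{(t)}+\boldsymbol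 n_j^{(t,s)}$ and forms $\hat{\boldsymbol y}_{ij}^{(t,s)}=w_{ji}\frac md(\boldsymbol A^{(t)})^T\Re\{\boldsymbol y_{ij}^{(t,s)}/(\sqrt{\alpha_i^{(t,s)}}h_{ij}^{\prime(t)})\}$. (4) $\hat{\boldsymbol y}_j^{(t+1)}=\hat{\boldsymbol y}_j^{(t)}+\sum_{s\in\mathcal{S}_j^{\rm AR}}\hat{\boldsymbol y}_j^{(t,s)}+\sum_{s\in\mathcal{S}_j^{\rm BR}}\hat{\boldsymbol y}_{i_sj}^{(t,s)}$, $\hat{\boldsymbol\theta}_j^{(t+1)}=\hat{\boldsymbol\theta}_j^{(t)}+\frac md(\boldsymbol A^{(t)})^T\boldsymbol A^{(t)}\boldsymbol u_j^{(t)}$, and $\boldsymbol\theta_j^{(t+1)}=\boldsymbol\theta_j^{(t+1/2)}+\zeta^{(t)}(w_{jj}\hat{\boldsymbol\theta}_j^{(t+1)}+\hat{\boldsymbol y}_j^{(t+1)}-\hat{\boldsymbol\theta}_j^{(t+1)})$. Power scaling (equal power per transmit slot, with the constraints $\mathbb{E}_{\boldsymbol A}\|\boldsymbol x\|^2\le NP^{(t)}/|\mathcal{S}_i^{\rm Tx}|$ met with the largest feasible factors): $\gamma_j^{(t,s)}=\min_{i\in\mathcal{N}_j^{(s)}}\frac{NP^{(t)}|h_{ij}^{\prime(t)}|^2}{|\mathcal{S}_i^{\rm Tx}|w_{ji}^2\|\boldsymbol u_i^{(t)}\|^2}$ and $\alpha_i^{(t,s)}=\frac{NP^{(t)}}{|\mathcal{S}_i^{\rm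 Tx}|\|\boldsymbol u_i^{(t)}\|^2}$ (assumed well defined). *)

(* Defs.v *)
From HB Require Import structures.
From mathcomp Require Import all_boot all_order all_algebra.
From mathcomp Require Import all_classical all_reals all_analysis.
From mathcomp Require Import complex.
Set Implicit Arguments.
Unset Strict Implicit.
Unset Printing Implicit Defensive.
Import Order.TTheory GRing.Theory Num.Theory.
Local Open Scope ring_scope.

Definition sqnorm (R : realType) (n : nat) (v : 'cV[R]_n) : R :=
  \sum_(k < n) (v k ord0) ^+ 2.

Definition cabs2 (R : realType) (z : R[i]) : R :=
  (complex.Re z) ^+ 2 + (complex.Im z) ^+ 2.

Definition cplxv (R : realType) (n : nat) (v : 'cV[R]_n) : 'cV[R[i]]_n :=
  map_mx (fun x : R => (x%:C)%C) v.
Definition rev (R : realType) (n : nat) (v : 'cV[R[i]]_n) : 'cV[R]_n :=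
  map_mx (@complex.Re R) v.

(* minimum / maximum of f over a finite NONEMPTY set S (0 if S is empty) *)
Definition setmin (R : realType) (T : finType) (S : {set T}) (f : T -> R) : R :=
  match [pick x in S] with
  | Some x0 => \big[Num.min/f x0]_(x in S) f x
  | None => 0 end.
Definition setmax (R : realType) (T : finType) (S : {set T}) (f : T -> R) : R :=
  match [pick x in S] with
  | Some x0 => \big[Num.max/f x0]_(x in S) f x
  | None => 0 end.

Definition opnorm_lt1 (R : realType) (K : nat) (B : 'M[R]_K) : Prop :=
  exists c : R, 0 <= c /\ c < 1 /\
    forall x : 'cV[R]_K, sqnorm (B *m x) <= c ^+ 2 * sqnorm x.

Section Gauss.
Context (R : realType) (dT : measure_display) (T : measurableType dT)
        (Pr : probability T R).
Local Open Scope classical_set_scope.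

Definition is_normal (X : T -> R) (v : R) : Prop :=
  measurable_fun setT X /\
  forall B : set R, measurable B ->
    Pr (X @^-1` B) =
    (if v == 0 then (\1_B (0:R))%:E else normal_prob 0 (Num.sqrt v) B).

(* The family (Z k)_k is i.i.d. N(0, v): every finite linear combination
   sum_k c_k Z_k is N(0, v * sum_k c_k^2)  (jointly Gaussian, covariance v I). *)
Definition gauss_iid (I : eqType) (Z : I -> T -> R) (v : R) : Prop :=
  forall (s : seq I) (c : I -> R), uniq s ->
    is_normal (fun w => \sum_(k <- s) c k * Z k w) (v * \sum_(k <- s) c k ^+ 2).

Definition gauss_vec (m : nat) (X : T -> 'cV[R]_m) (v : R) : Prop :=
  gauss_iid (fun (k : 'I_m) w => X w k ord0) v.

(* Noise n_j^{(t,s)} ~ CN(0, N0 I_m), i.i.d. over devices j, slots s,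
   iterations t: real and imaginary parts of all entries are i.i.d. N(0,N0/2). *)
Definition noise_iid (K M m : nat)
    (nz : T -> nat -> 'I_K -> 'I_M -> 'cV[R[i]]_m) (N0 : R) : Prop :=
  gauss_iid (fun (k : nat * 'I_K * 'I_M * 'I_m * bool) w =>
               let: (t, j, s, l, b) := k in
               if b then complex.Re (nz w t j s l ord0)
               else complex.Im (nz w t j s l ord0)) (N0 / 2).
End Gauss.

(* Slots are 'I_M; slot index s : 'I_M stands for slot number s+1, so the
   "odd slots" are those with ~~ odd s. *)
Record schedule (K M : nat) := Schedule {
  SAT : 'I_K -> {set 'I_M};
  SAR : 'I_K -> {set 'I_M};
  SBT : 'I_K -> {set 'I_M};
  SBR : 'I_K -> {set 'I_M};
  Nsch : 'I_K -> 'I_M -> {set 'I_K};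
  bcast : 'I_K -> 'I_M -> 'I_K
}.

Definition STx (K M : nat) (sc : schedule K M) (i : 'I_K) : {set 'I_M} :=
  SAT sc i :|: SBT sc i.

Definition schedule_ok (K M : nat) (adj : rel 'I_K) (sc : schedule K M) : Prop :=
  (forall i, [disjoint SAT sc i & SAR sc i] /\ [disjoint SBT sc i & SBR sc i]
             /\ [disjoint SAT sc i :|: SAR sc i & SBT sc i :|: SBR sc i]) /\
  (forall i (s : 'I_M), s \in SAT sc i :|: SAR sc i -> ~~ odd s) /\
  (forall i (s : 'I_M), s \in SBT sc i :|: SBR sc i -> odd s) /\
  (forall j s, s \in SAR sc j ->
     (0 < #|Nsch sc j s|)%N /\
     (forall i, i \in Nsch sc j s -> adj j i) /\
     (forall i, i \in Nsch sc j s -> s \in SAT sc i)) /\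
  (forall j s, s \in SBR sc j ->
     adj j (bcast sc j s) /\ s \in SBT sc (bcast sc j s)) /\
  (* the sets N_j^{(s)} (s in S_j^AR) and {i_s} (s in S_j^BR) partition N_j:
     every neighbour i of j lies in exactly one of them *)
  (forall j i, adj j i ->
     (#|[set s in SAR sc j | i \in Nsch sc j s]|
      + #|[set s in SBR sc j | bcast sc j s == i]|)%N = 1%N).

Definition mdr (R : realType) (m d : nat) : R := m%:R / d%:R.

Section Protocol.
Context (R : realType) (K d m M : nat).
Variable (W : 'M[R]_K) (A : nat -> 'M[R]_(m, d)) (N : nat)
         (P eta zeta : nat -> R)
         (grad : nat -> 'I_K -> 'cV[R]_d -> 'cV[R]_d)
         (h : nat -> 'I_K -> 'I_K -> R[i])   (* h t i j : channel i -> j *)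
         (nz : nat -> 'I_K -> 'I_M -> 'cV[R[i]]_m)
         (sc : schedule K M) (theta0 : 'I_K -> 'cV[R]_d).


Definition state := 'I_K -> 'cV[R]_d * 'cV[R]_d * 'cV[R]_d.  (* (theta, theta_hat, y_hat) *)

Definition thalf_of (t : nat) (st : state) (j : 'I_K) : 'cV[R]_d :=
  (st j).1.1 - eta t *: grad t j (st j).1.1.

Definition u_of (t : nat) (st : state) (j : 'I_K) : 'cV[R]_d :=
  thalf_of t st j - (st j).1.2.

Definition gamma_of (t : nat) (st : state) (j : 'I_K) (s : 'I_M) : R :=
  setmin (Nsch sc j s) (fun i => N%:R * P t * cabs2 (h t i j) /
           (#|STx sc i|%:R * W j i ^+ 2 * sqnorm (u_of t st i))).

Definition alpha_of (t : nat) (st : state) (i : 'I_K) : R :=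
  N%:R * P t / (#|STx sc i|%:R * sqnorm (u_of t st i)).

Definition yAR (t : nat) (st : state) (j : 'I_K) (s : 'I_M) : 'cV[R[i]]_m :=
  (Num.sqrt (gamma_of t st j s))%:C%C *:
     cplxv (\sum_(i in Nsch sc j s) W j i *: (A t *m u_of t st i))
  + nz t j s.
Definition yhatAR (t : nat) (st : state) (j : 'I_K) (s : 'I_M) : 'cV[R]_d :=
  mdr R m d *: ((A t)^T *m rev (((Num.sqrt (gamma_of t st j s))%:C%C)^-1 *: yAR t st j s)).

Definition yBR (t : nat) (st : state) (j : 'I_K) (s : 'I_M) : 'cV[R[i]]_m :=
  let i := bcast sc j s in
  ((Num.sqrt (alpha_of t st i))%:C%C * h t i j) *: cplxv (A t *m u_of t st i)
  + nz t j s.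
Definition yhatBR (t : nat) (st : state) (j : 'I_K) (s : 'I_M) : 'cV[R]_d :=
  let i := bcast sc j s in
  W j i *: (mdr R m d *: ((A t)^T *m
     rev ((((Num.sqrt (alpha_of t st i))%:C%C * h t i j)^-1) *: yBR t st j s))).

Definition step (t : nat) (st : state) : state := fun j =>
  let thh' := (st j).1.2 + mdr R m d *: ((A t)^T *m (A t *m u_of t st j)) in
  let yh' := (st j).2 + \sum_(s in SAR sc j) yhatAR t st j s
                      + \sum_(s in SBR sc j) yhatBR t st j s in
  let th' := thalf_of t st j + zeta t *: (W j j *: thh' + yh' - thh') in
  (th', thh', yh').

Fixpoint traj (t : nat) : state :=
  match t with
  | 0 => fun j => (theta0 j, 0, 0)
  | t'.+1 => step t' (traj t')
  end.

Definition theta t j := (traj t j).1.1.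
Definition thetahat t j := (traj t j).1.2.
Definition yhat t j := (traj t j).2.
Definition thalf t j := thalf_of t (traj t) j.
Definition uvec t j := u_of t (traj t) j.

End Protocol.

(* Effective noise variance  \tilde N_{0i}^{(t)}  computed from channel values
   hv (hv i j = h'_{ij}) and vectors uv (uv j = u_j^{(t)}). *)
Definition Ntil (R : realType) (K d M : nat) (W : 'M[R]_K) (N : nat) (N0 : R)
    (P : nat -> R) (sc : schedule K M) (t : nat) (i : 'I_K)
    (hv : 'I_K -> 'I_K -> R[i]) (uv : 'I_K -> 'cV[R]_d) : R :=
  1 / 2 * (N0 / (N%:R * P t)) *
  (\sum_(s in SAR sc i) setmax (Nsch sc i s)
       (fun j => #|STx sc j|%:R * W i j ^+ 2 * sqnorm (uv j) / cabs2 (hv i j))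
   + \sum_(s in SBR sc i)
       (let j := bcast sc i s in
        #|STx sc j|%:R * W i j ^+ 2 * sqnorm (uv j) / cabs2 (hv i j))).

Definition codemx (R : realType) (m d : nat) (H : 'M[R]_(m, d))
    (Rsign : nat -> 'I_d -> R) (t : nat) : 'M[R]_(m, d) :=
  (Num.sqrt (m%:R : R))^-1 *: (H *m diag_mx (\row_k Rsign t k)).

(* Main.v *)
Require Import Defs.
From HB Require Import structures.
From mathcomp Require Import all_boot all_order all_algebra.
From mathcomp Require Import all_classical all_reals all_analysis.
From mathcomp Require Import complex.
From mathcomp Require Import ring.
Import Order.TTheory GRing.Theory Num.Theory.
Local Open Scope ring_scope.
Set Implicit Arguments. Unset Strict Implicit. Unset Printing Implicit Defensive.

Section H.
Variable R : realType.
Implicit Types x y z : R[i].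

Lemma ReM x y : complex.Re (x * y) = complex.Re x * complex.Re y - complex.Im x * complex.Im y.
Proof. by case: x => a b; case: y => c d. Qed.
Lemma ReD x y : complex.Re (x + y) = complex.Re x + complex.Re y.
Proof. by case: x => a b; case: y => c d. Qed.
Lemma ImD x y : complex.Im (x + y) = complex.Im x + complex.Im y.
Proof. by case: x => a b; case: y => c d. Qed.
Lemma Re0 : complex.Re (0 : R[i]) = 0. Proof. by []. Qed.
Lemma Im0 : complex.Im (0 : R[i]) = 0. Proof. by []. Qed.
Lemma ReC (a : R) : complex.Re (a%:C)%C = a. Proof. by []. Qed.
Lemma cabs2E z : cabs2 z = (Normc.normc z) ^+ 2.
Proof. by case: z => a b; rewrite /cabs2 /= sqr_sqrtr // addr_ge0 // sqr_ge0. Qed.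
Lemma cabs2M x y : cabs2 (x * y) = cabs2 x * cabs2 y.
Proof. by rewrite !cabs2E Normc.normcM exprMn. Qed.
Lemma cabs2V x : cabs2 (x^-1) = (cabs2 x)^-1.
Proof. by rewrite !cabs2E Normc.normcV exprVn. Qed.
Lemma cabs2C (a : R) : cabs2 (a%:C)%C = a ^+ 2.
Proof. by rewrite /cabs2 /= expr0n /= addr0. Qed.
Lemma cabs2D0 x y : cabs2 (x + y) = cabs2 x + cabs2 y -> True. Proof. by []. Qed.
Lemma cabs2_gt0 z : z != 0 -> 0 < cabs2 z.
Proof.
move=> nz; rewrite lt_def addr_ge0 ?sqr_ge0 // andbT.
apply: contra nz; rewrite /cabs2 paddr_eq0 ?sqr_ge0 // !sqrf_eq0 => /andP[/eqP a /eqP b].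
by apply/eqP; case: z a b => a b /= -> ->.
Qed.
Lemma sqnorm_gt0 (k : nat) (v : 'cV[R]_k) : v != 0 -> 0 < sqnorm v.
Proof.
move=> nz; rewrite lt_def sumr_ge0 ?andbT; last by move=> *; rewrite sqr_ge0.
apply: contra nz; rewrite psumr_eq0; last by move=> *; rewrite sqr_ge0.
move=> /allP H; apply/eqP/matrixP => a b; rewrite ord1 mxE.
by have := H a (mem_index_enum a); rewrite sqrf_eq0 => /eqP.
Qed.
End H.
Section S.
Variable R : realType.
Lemma minV (a c : R) : 0 < a -> 0 < c -> (Num.min a c)^-1 = Num.max a^-1 c^-1.
Proof.
move=> a0 c0; have [h|h] := leP a c.
  by rewrite max_l // lef_pV2 ?posrE.
by rewrite max_r // lef_pV2 ?posrE // ltW.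
Qed.
Lemma maxZ (k a c : R) : 0 <= k -> Num.max (k * a) (k * c) = k * Num.max a c.
Proof.
move=> k0; have [h|h] := leP a c.
  by rewrite max_r // ler_wpM2l.
by rewrite max_l // ler_wpM2l // ltW.
Qed.
Lemma min_gt0 (a c : R) : 0 < a -> 0 < c -> 0 < Num.min a c.
Proof. by move=> a0 c0; rewrite lt_min a0 c0. Qed.

Variable T : finType.
Implicit Types (S : {set T}) (f g : T -> R).
Lemma setmin_gt0 S f : (forall x, x \in S -> 0 < f x) -> (exists x, x \in S) -> 0 < setmin S f.
Proof.
move=> H [y yS]; rewrite /setmin; case: pickP => [x0 Hx0|/(_ y)]; last by rewrite yS.
by apply: (big_ind (fun a => 0 < a)); [exact: H|exact: min_gt0|].
Qed.
Lemma setminV S f : (forall x, x \in S -> 0 < f x) -> (setmin S f)^-1 = setmax S (fun x => (f x)^-1).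
Proof.
move=> H; rewrite /setmin /setmax; case: pickP => [x0 Hx0|_]; last by rewrite invr0.
suff : 0 < \big[Num.min/f x0]_(x in S) f x /\ \big[Num.max/(f x0)^-1]_(x in S) (f x)^-1 = (\big[Num.min/f x0]_(x in S) f x)^-1 by case.
apply: (big_ind2 (fun a b => 0 < a /\ b = a^-1)).
- by split; [exact: H|].
- by move=> a b c e [a0 ->] [c0 ->]; split; [exact: min_gt0|rewrite minV].
- by move=> x xS; split; [exact: H|].
Qed.
Lemma setmaxZ S f k : 0 <= k -> setmax S (fun x => k * f x) = k * setmax S f.
Proof.
move=> k0; rewrite /setmax; case: pickP => [x0 Hx0|_]; last by rewrite mulr0.
apply: (big_ind2 (fun a b => a = k * b)) => //.
by move=> a b c e -> ->; rewrite maxZ.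
Qed.
Lemma setmax_ext S f g : {in S, f =1 g} -> setmax S f = setmax S g.
Proof.
move=> H; rewrite /setmax; case: pickP => [x0 Hx0|_] //.
rewrite H //; exact: eq_bigr.
Qed.
End S.
Section P.
Variables (K M : nat) (adj : rel 'I_K) (sc : schedule K M) (V : zmodType) (i : 'I_K).
Hypothesis h1 : forall s j, s \in SAR sc i -> j \in Nsch sc i s -> adj i j.
Hypothesis h2 : forall s, s \in SBR sc i -> adj i (bcast sc i s).
Hypothesis h3 : forall j, adj i j ->
     (#|[set s in SAR sc i | j \in Nsch sc i s]|
      + #|[set s in SBR sc i | bcast sc i s == j]|)%N = 1%N.
Lemma partition_sum (F : 'I_K -> V) :
  \sum_(s in SAR sc i) \sum_(j in Nsch sc i s) F j + \sum_(s in SBR sc i) F (bcast sc i s)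
  = \sum_(j | adj i j) F j.
Proof.
have E1 : \sum_(s in SAR sc i) \sum_(j in Nsch sc i s) F j =
   \sum_j \sum_(s in SAR sc i) (if j \in Nsch sc i s then F j else 0).
  rewrite (eq_bigr (fun s => \sum_j (if j \in Nsch sc i s then F j else 0))); last by move=> s _; rewrite big_mkcond.
  by rewrite exchange_big.
have E2 : \sum_(s in SBR sc i) F (bcast sc i s) =
   \sum_j \sum_(s in SBR sc i) (if bcast sc i s == j then F j else 0).
  rewrite [RHS]exchange_big /=; apply: eq_bigr => s _.
  rewrite -big_mkcond /= (eq_bigl (fun j => j == bcast sc i s)) ?big_pred1_eq //.
rewrite E1 E2 -big_split /= [RHS]big_mkcond /=; apply: eq_bigr => j _.
case: ifP => aij.
  rewrite -!big_mkcondr /=.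
  rewrite (eq_bigl (fun s => s \in [set s in SAR sc i | j \in Nsch sc i s])); last by move=> s; rewrite inE.
  rewrite [X in _ + X](eq_bigl (fun s => s \in [set s in SBR sc i | bcast sc i s == j])); last by move=> s; rewrite inE.
  by rewrite !sumr_const -mulrnDr h3.
rewrite !big1 ?addr0 //.
  by move=> s sB; case: eqP => // E; move: (h2 sB); rewrite E aij.
by move=> s sA; case: ifP => // jN; move: (h1 sA jN); rewrite aij.
Qed.
End P.

Section Rv.
Variable R : realType.
Lemma revD (k : nat) (x y : 'cV[R[i]]_k) : Defs.rev (x + y) = Defs.rev x + Defs.rev y.
Proof. by apply/matrixP => a b; rewrite !mxE; case: (x a b) => ? ?; case: (y a b). Qed.
Lemma rev0 (k : nat) : Defs.rev (0 : 'cV[R[i]]_k) = 0.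
Proof. by apply/matrixP => a b; rewrite !mxE. Qed.
Lemma rev_sum (k : nat) (I : Type) (r : seq I) (Pr : pred I) (F : I -> 'cV[R[i]]_k) :
  Defs.rev (\sum_(x <- r | Pr x) F x) = \sum_(x <- r | Pr x) Defs.rev (F x).
Proof. exact: (big_morph _ (@revD k) (@rev0 k)). Qed.
Lemma rev_cplx (k : nat) (v : 'cV[R]_k) : Defs.rev (cplxv v) = v.
Proof. by apply/matrixP => a b; rewrite !mxE. Qed.
Lemma revZC (k : nat) (a : R) (v : 'cV[R[i]]_k) : Defs.rev ((a%:C)%C *: v) = a *: Defs.rev v.
Proof. by apply/matrixP => a' b; rewrite !mxE; case: (v a' b) => ? ? /=; rewrite mul0r subr0. Qed.
Lemma rev_key (k : nat) (g : R[i]) (X : 'cV[R]_k) (Y : 'cV[R[i]]_k) :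
  g != 0 \/ k = 0%N -> Defs.rev (g^-1 *: (g *: cplxv X + Y)) = X + Defs.rev (g^-1 *: Y).
Proof.
case=> [g0|k0]; last by move: X Y; rewrite k0 => X Y; apply/matrixP => -[a ha]; exfalso; by rewrite ltn0 in ha.
by rewrite scalerDr scalerA mulVf // scale1r revD rev_cplx.
Qed.
End Rv.

Lemma sqr_gt0' {R : realType} (x : R) : x != 0 -> 0 < x ^+ 2.
Proof. by move=> x0; rewrite lt_def sqr_ge0 andbT sqrf_eq0. Qed.

Section Ntil.
Variables (R : realType) (K d m M : nat) (W : 'M[R]_K) (N : nat) (P : nat -> R)
  (sc : schedule K M).

Definition gam t (i : 'I_K) (hv : 'I_K -> 'I_K -> R[i]) (uv : 'I_K -> 'cV[R]_d) s :=
  setmin (Nsch sc i s) (fun j => N%:R * P t * cabs2 (hv j i) /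
           (#|STx sc j|%:R * W i j ^+ 2 * sqnorm (uv j))).
Definition alp t (uv : 'I_K -> 'cV[R]_d) (j : 'I_K) : R :=
  N%:R * P t / (#|STx sc j|%:R * sqnorm (uv j)).
Definition kap t i hv uv (s : 'I_M) : R[i] :=
  (if s \in SAR sc i then ((Num.sqrt (gam t i hv uv s))%:C)^-1 else 0)%C
  + (if s \in SBR sc i then (W i (bcast sc i s))%:C *
        ((Num.sqrt (alp t uv (bcast sc i s)))%:C * hv (bcast sc i s) i)^-1 else 0)%C.
Definition ntilf t i hv uv (nzv : 'I_K -> 'I_M -> 'cV[R[i]]_m) : 'cV[R]_m :=
  \sum_(s : 'I_M) Defs.rev (kap t i hv uv s *: nzv i s).

Lemma gterm_gt0 t i (hv : 'I_K -> 'I_K -> R[i]) (uv : 'I_K -> 'cV[R]_d) s j :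
  (0 < N)%N -> 0 < P t -> s \in SAT sc j -> W i j != 0 -> hv j i != 0 -> uv j != 0 ->
  0 < N%:R * P t * cabs2 (hv j i) / (#|STx sc j|%:R * W i j ^+ 2 * sqnorm (uv j)).
Proof.
move=> N0 P0 sA W0 h0 u0.
have w2 := sqr_gt0' W0.
have c0 : (0 < #|STx sc j|)%N by apply/card_gt0P; exists s; rewrite inE sA.
apply: divr_gt0; apply: mulr_gt0 => //; try apply: mulr_gt0 => //;
  by rewrite ?ltr0n ?cabs2_gt0 ?sqnorm_gt0.
Qed.

Lemma gam_gt0 t i hv uv s : (0 < N)%N -> 0 < P t ->
  (exists j, j \in Nsch sc i s) ->
  (forall j, j \in Nsch sc i s ->
     [/\ s \in SAT sc j, W i j != 0, hv j i != 0 & uv j != 0]) ->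
  0 < gam t i hv uv s.
Proof.
move=> N0 P0 ex H; apply: setmin_gt0 ex => j /H [sA W0 h0 u0].
exact: gterm_gt0 N0 P0 sA W0 h0 u0.
Qed.

Lemma alp_gt0 t uv j s : (0 < N)%N -> 0 < P t -> s \in SBT sc j -> uv j != 0 ->
  0 < alp t uv j.
Proof.
move=> N0 P0 sB u0; rewrite divr_gt0 // ?mulr_gt0 ?ltr0n ?sqnorm_gt0 //.
by apply/card_gt0P; exists s; rewrite inE sB orbT.
Qed.
End Ntil.

Lemma complex_neq0 (R : realType) (x : R) : 0 < x -> (x%:C)%C != 0 :> R[i].
Proof. by move=> x0; apply/eqP => -[E]; move: x0; rewrite E ltxx. Qed.

Section Part1.
Variables (R : realType) (K d m M : nat) (adj : rel 'I_K) (W : 'M[R]_K)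
  (A : nat -> 'M[R]_(m, d)) (N : nat) (P eta zeta : nat -> R)
  (grad : nat -> 'I_K -> 'cV[R]_d -> 'cV[R]_d)
  (h : nat -> 'I_K -> 'I_K -> R[i])
  (nz : nat -> 'I_K -> 'I_M -> 'cV[R[i]]_m)
  (sc : schedule K M) (theta0 : 'I_K -> 'cV[R]_d).

Local Notation st := (traj W A N P eta zeta grad h nz sc theta0).
Local Notation u := (uvec W A N P eta zeta grad h nz sc theta0).
Local Notation thh := (thetahat W A N P eta zeta grad h nz sc theta0).
Local Notation yh := (yhat W A N P eta zeta grad h nz sc theta0).

Definition Lin t (v : 'cV[R]_m) : 'cV[R]_d := mdr R m d *: ((A t)^T *m v).
Lemma LinD t x y : Lin t (x + y) = Lin t x + Lin t y.
Proof. by rewrite /Lin mulmxDr scalerDr. Qed.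
Lemma Lin0 t : Lin t 0 = 0.
Proof. by rewrite /Lin mulmx0 scaler0. Qed.
Lemma LinZ t a x : Lin t (a *: x) = a *: Lin t x.
Proof. by rewrite /Lin -scalemxAr !scalerA mulrC. Qed.
Lemma Lin_sum t (I : Type) (r : seq I) (Pr : pred I) (F : I -> 'cV[R]_m) :
  Lin t (\sum_(x <- r | Pr x) F x) = \sum_(x <- r | Pr x) Lin t (F x).
Proof. exact: (big_morph _ (LinD t) (Lin0 t)). Qed.

Hypothesis Hs1 : forall i s j, s \in SAR sc i -> j \in Nsch sc i s -> adj i j.
Hypothesis Hs1' : forall i s j, s \in SAR sc i -> j \in Nsch sc i s -> s \in SAT sc j.
Hypothesis Hs1'' : forall i s, s \in SAR sc i -> exists j, j \in Nsch sc i s.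
Hypothesis Hs2 : forall i s, s \in SBR sc i -> adj i (bcast sc i s).
Hypothesis Hs2' : forall i s, s \in SBR sc i -> s \in SBT sc (bcast sc i s).
Hypothesis Hpart : forall i j, adj i j ->
     (#|[set s in SAR sc i | j \in Nsch sc i s]|
      + #|[set s in SBR sc i | bcast sc i s == j]|)%N = 1%N.
Hypothesis HW : forall j s i, s \in SAR sc j -> i \in Nsch sc j s -> W j i != 0.
Hypothesis HN : forall s : 'I_M, (0 < m)%N -> (0 < N)%N.
Hypothesis HP : forall t, 0 < P t.
Hypothesis Hh : forall t i j, adj i j -> h t i j != 0.
Hypothesis Hhs : forall t i j, h t i j = h t j i.
Hypothesis Hu1 : forall t j s i, s \in SAR sc j -> i \in Nsch sc j s -> u t i != 0.
Hypothesis Hu2 : forall t j s, s \in SBR sc j -> u t (bcast sc j s) != 0.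

Lemma slot_AR t i s : s \in SAR sc i ->
  yhatAR W A N P eta grad h nz sc t (st t) i s =
  Lin t (\sum_(j in Nsch sc i s) W i j *: (A t *m u t j))
  + Lin t (Defs.rev (((Num.sqrt (gam W N P sc t i (h t) (u t) s))%:C)^-1%C *: nz t i s)).
Proof.
move=> sA; rewrite /yhatAR /yAR rev_key; first by rewrite -LinD.
case: (posnP m) => [m0|m0]; [by right|left].
apply: complex_neq0; rewrite sqrtr_gt0.
apply: gam_gt0 => //; [exact: HN| exact: Hs1''|].
move=> j jN; split; [exact: Hs1' jN|exact: HW jN| |exact: Hu1 jN].
by rewrite Hhs; apply: Hh; exact: Hs1 jN.
Qed.

Lemma slot_BR t i s : s \in SBR sc i ->
  yhatBR W A N P eta grad h nz sc t (st t) i s =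
  W i (bcast sc i s) *: Lin t (A t *m u t (bcast sc i s))
  + W i (bcast sc i s) *: Lin t (Defs.rev ((((Num.sqrt (alp N P sc t (u t) (bcast sc i s)))%:C
        * h t (bcast sc i s) i)^-1)%C *: nz t i s)).
Proof.
move=> sB; rewrite /yhatBR /yBR /= rev_key; first by rewrite -scalerDr -LinD.
case: (posnP m) => [m0|m0]; [by right|left].
apply: mulf_neq0; last by rewrite Hhs; apply: Hh; exact: Hs2.
apply: complex_neq0; rewrite sqrtr_gt0.
apply: alp_gt0 => //; [exact: HN| exact: Hs2'|exact: Hu2].
Qed.

Lemma revLin_split t (a b : R[i]) (v : 'cV[R[i]]_m) :
  Lin t (Defs.rev ((a + b) *: v)) = Lin t (Defs.rev (a *: v)) + Lin t (Defs.rev (b *: v)).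
Proof. by rewrite scalerDl revD LinD. Qed.

Lemma slot_sum t i :
  \sum_(s in SAR sc i) yhatAR W A N P eta grad h nz sc t (st t) i s
  + \sum_(s in SBR sc i) yhatBR W A N P eta grad h nz sc t (st t) i s =
  \sum_(j | adj i j) W i j *: Lin t (A t *m u t j)
  + Lin t (ntilf W N P sc t i (h t) (u t) (nz t)).
Proof.
rewrite (eq_bigr _ (@slot_AR t i)) (eq_bigr _ (@slot_BR t i)) !big_split /= addrACA.
congr (_ + _).
  rewrite -(partition_sum (Hs1 (i:=i)) (Hs2 (i:=i)) (Hpart (i:=i))); congr (_ + _).
  by apply: eq_bigr => s _; rewrite Lin_sum; apply: eq_bigr => j _; rewrite LinZ.
rewrite /ntilf Lin_sum.
symmetry; rewrite [LHS](eq_bigr _ (fun x _ => revLin_split _ _ _ _)).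
rewrite big_split /=; congr (_ + _).
  rewrite [RHS]big_mkcond /=; apply: eq_bigr => s _.
  by case: ifP => _; rewrite ?scale0r ?rev0 ?Lin0.
rewrite [RHS]big_mkcond /=; apply: eq_bigr => s _.
by case: ifP => _; rewrite ?scale0r ?rev0 ?Lin0 // -scalerA revZC LinZ.
Qed.

Lemma thh_step t j : thh t.+1 j = thh t j + Lin t (A t *m u t j).
Proof. by []. Qed.
Lemma yh_step t i : yh t.+1 i = yh t i
  + \sum_(s in SAR sc i) yhatAR W A N P eta grad h nz sc t (st t) i s
  + \sum_(s in SBR sc i) yhatBR W A N P eta grad h nz sc t (st t) i s.
Proof. by []. Qed.

Lemma yh_formula t i : yh t i = \sum_(j | adj i j) W i j *: thh t j
  + \sum_(tau < t) Lin tau (ntilf W N P sc tau i (h tau) (u tau) (nz tau)).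
Proof.
elim: t => [|t IH].
  rewrite big_ord0 addr0 big1 //= => j _; exact: scaler0.
rewrite yh_step IH -addrA slot_sum big_ord_recr.
rewrite [in RHS](eq_bigr (fun j => W i j *: thh t j + W i j *: Lin t (A t *m u t j))); last first.
  by move=> j _; rewrite thh_step scalerDr.
rewrite big_split /=.
by rewrite -!addrA; congr (_ + _); rewrite addrCA.
Qed.

Hypothesis Hirr : irreflexive adj.
Hypothesis Hrow : forall i, \sum_(j < K) W i j = 1.
Hypothesis HW0 : forall i j, i != j -> ~~ adj i j -> W i j = 0.

Lemma theta_formula t i :
  theta W A N P eta zeta grad h nz sc theta0 t.+1 i =
    thalf W A N P eta zeta grad h nz sc theta0 t i
    + zeta t *: \sum_(j | adj i j || (j == i)) W i j *: (thh t.+1 j - thh t.+1 i)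
    + zeta t *: \sum_(tau < t.+1)
         (mdr R m d *: ((A tau)^T *m ntilf W N P sc tau i (h tau) (u tau) (nz tau))).
Proof.
have -> : theta W A N P eta zeta grad h nz sc theta0 t.+1 i =
   thalf W A N P eta zeta grad h nz sc theta0 t i
   + zeta t *: (W i i *: thh t.+1 i + yh t.+1 i - thh t.+1 i) by [].
rewrite -[in RHS]addrA -[in RHS]scalerDr yh_formula; congr (_ + _ *: _).
have S1 : \sum_(j | adj i j || (j == i)) W i j = 1.
  rewrite -(Hrow i) [RHS](bigID (fun j => adj i j || (j == i))) /=.
  rewrite [X in _ = _ + X]big1 ?addr0 // => j; rewrite negb_or => /andP[nadj nji]; apply: HW0 => //.
  by rewrite eq_sym.
have S2 : forall F : 'I_K -> 'cV[R]_d,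
    \sum_(j | adj i j || (j == i)) F j = F i + \sum_(j | adj i j) F j.
  move=> F; rewrite (bigD1 i) /= ?eqxx ?orbT //; congr (_ + _).
  apply: eq_bigl => j; case: (eqVneq j i) => [->|nji]; first by rewrite Hirr.
  by rewrite orbF andbT.
rewrite [in RHS](eq_bigr (fun j => W i j *: thh t.+1 j - W i j *: thh t.+1 i)); last first.
  by move=> j _; rewrite scalerBr.
rewrite sumrB -scaler_suml S1 scale1r S2.
have E : forall (V : zmodType) (a b c x : V), a + (b + c) - x = a + b - x + c.
  by move=> V a b c x; rewrite addrA; exact: addrAC.
exact: E.
Qed.

End Part1.

Lemma is_normal_ext (R : realType) (dT : measure_display) (T : measurableType dT)
  (Pr : probability T R) (X Y : T -> R) (v v' : R) :
  is_normal Pr X v -> X =1 Y -> v = v' -> is_normal Pr Y v'.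
Proof. by move=> H /funext <- <-. Qed.

Section Part2.
Variables (R : realType) (K d m M : nat) (adj : rel 'I_K) (W : 'M[R]_K)
  (N : nat) (N0 : R) (P : nat -> R) (sc : schedule K M).

Hypothesis Hs1 : forall i s j, s \in SAR sc i -> j \in Nsch sc i s -> adj i j.
Hypothesis Hs1' : forall i s j, s \in SAR sc i -> j \in Nsch sc i s -> s \in SAT sc j.
Hypothesis Hs1'' : forall i s, s \in SAR sc i -> exists j, j \in Nsch sc i s.
Hypothesis Hs2 : forall i s, s \in SBR sc i -> adj i (bcast sc i s).
Hypothesis Hs2' : forall i s, s \in SBR sc i -> s \in SBT sc (bcast sc i s).
Hypothesis HW : forall j s i, s \in SAR sc j -> i \in Nsch sc j s -> W j i != 0.
Hypothesis HN : forall s : 'I_M, (0 < m)%N -> (0 < N)%N.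
Hypothesis HP : forall t, 0 < P t.
Hypothesis Hdisj : forall i s, s \in SAR sc i -> s \in SBR sc i -> False.

Lemma ntil_entry t i hv (uv : 'I_K -> 'cV[R]_d) (nzv : 'I_K -> 'I_M -> 'cV[R[i]]_m) k :
  (ntilf W N P sc t i hv uv nzv) k ord0 =
  \sum_(s : 'I_M) (complex.Re (kap W N P sc t i hv uv s) * complex.Re (nzv i s k ord0)
                   - complex.Im (kap W N P sc t i hv uv s) * complex.Im (nzv i s k ord0)).
Proof. by rewrite /ntilf summxE; apply: eq_bigr => s _; rewrite !mxE ReM. Qed.

Variables (t : nat) (i : 'I_K) (hv : 'I_K -> 'I_K -> R[i]) (uv : 'I_K -> 'cV[R]_d).
Hypothesis Hadj : forall j k, adj j k -> hv j k != 0.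
Hypothesis Hsym : forall j k, hv j k = hv k j.
Hypothesis Hu1 : forall s j, s \in SAR sc i -> j \in Nsch sc i s -> uv j != 0.
Hypothesis Hu2 : forall s, s \in SBR sc i -> uv (bcast sc i s) != 0.

Lemma kap_norm : (0 < m)%N ->
  N0 / 2 * \sum_(s : 'I_M) cabs2 (kap W N P sc t i hv uv s) = Ntil W N N0 P sc t i hv uv.
Proof.
move=> m0.
have gpos s : s \in SAR sc i -> 0 < gam W N P sc t i hv uv s.
  move=> sA; apply: gam_gt0 => //; [exact: HN|exact: Hs1''|].
  move=> j jN; split; [exact: Hs1' jN|exact: HW jN| |exact: Hu1 jN].
  by rewrite Hsym; apply: Hadj; exact: Hs1 jN.
have apos s : s \in SBR sc i -> 0 < alp N P sc t uv (bcast sc i s).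
  move=> sB; apply: alp_gt0 => //; [exact: HN|exact: Hs2'|exact: Hu2].
rewrite (eq_bigr (fun s =>
   (if s \in SAR sc i then (gam W N P sc t i hv uv s)^-1 else 0) +
   (if s \in SBR sc i then W i (bcast sc i s) ^+ 2 /
        (alp N P sc t uv (bcast sc i s) * cabs2 (hv (bcast sc i s) i)) else 0))); last first.
  move=> s _; rewrite /kap.
  case sA: (s \in SAR sc i); case sB: (s \in SBR sc i).
  - by case: (Hdisj sA sB).
  - rewrite !addr0 cabs2V cabs2C sqr_sqrtr //; apply: ltW; exact: gpos.
  - rewrite !add0r cabs2M cabs2V cabs2M !cabs2C sqr_sqrtr //; apply: ltW; exact: apos.
  - by rewrite addr0 /cabs2 /= expr0n /= addr0.
rewrite big_split /= -!big_mkcond /=.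
rewrite /Ntil.
case: (posnP N) => [Nz|hN].
  rewrite !big1 ?addr0 ?mulr0 //; move=> s sX; exfalso;
    by (have := HN s m0); rewrite Nz.
set NP := N%:R * P t.
have NP0 : 0 < NP by rewrite /NP mulr_gt0 ?ltr0n ?HP.
rewrite (eq_bigr (fun s => NP^-1 * setmax (Nsch sc i s)
       (fun j => #|STx sc j|%:R * W i j ^+ 2 * sqnorm (uv j) / cabs2 (hv i j)))); last first.
  move=> s sA; rewrite /gam setminV; last first.
    move=> j jN; apply: gterm_gt0 => //; [exact: Hs1' jN|exact: HW jN| |exact: Hu1 jN].
    by rewrite Hsym; apply: Hadj; exact: Hs1 jN.
  rewrite -setmaxZ; last by rewrite invr_ge0 ltW.
  apply: setmax_ext => j jN /=.
  have h0 : 0 < cabs2 (hv i j) by apply: cabs2_gt0; apply: Hadj; exact: Hs1 jN.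
  have c0 : (0 < #|STx sc j|)%N by apply/card_gt0P; exists s; rewrite inE (Hs1' sA jN).
  have u0 : 0 < sqnorm (uv j) by apply: sqnorm_gt0; exact: Hu1 jN.
  have w0 := HW sA jN.
  rewrite [hv j i]Hsym /NP; field.
  by rewrite (lt0r_neq0 h0) (lt0r_neq0 (HP t)) (lt0r_neq0 u0) w0 !pnatr_eq0 -!lt0n hN c0.
rewrite [X in _ * (_ + X) = _](eq_bigr (fun s => NP^-1 *
   (#|STx sc (bcast sc i s)|%:R * W i (bcast sc i s) ^+ 2 * sqnorm (uv (bcast sc i s))
     / cabs2 (hv i (bcast sc i s))))); last first.
  move=> s sB; rewrite /alp -/NP.
  have h0 : 0 < cabs2 (hv i (bcast sc i s)) by apply: cabs2_gt0; apply: Hadj; exact: Hs2.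
  have c0 : (0 < #|STx sc (bcast sc i s)|)%N.
    by apply/card_gt0P; exists s; rewrite inE (Hs2' sB) orbT.
  have u0 : 0 < sqnorm (uv (bcast sc i s)) by apply: sqnorm_gt0; exact: Hu2.
  rewrite [hv (bcast sc i s) i]Hsym /NP; field.
  by rewrite (lt0r_neq0 h0) (lt0r_neq0 (HP t)) (lt0r_neq0 u0) !pnatr_eq0 -!lt0n hN c0.
rewrite -!mulr_sumr /=.
rewrite /NP; ring.
Qed.


Lemma gauss_part (dT : measure_display) (T : measurableType dT) (Pr : probability T R)
  (nzr : T -> nat -> 'I_K -> 'I_M -> 'cV[R[i]]_m) :
  noise_iid Pr nzr N0 ->
  gauss_vec Pr (fun w => ntilf W N P sc t i hv uv (nzr w t)) (Ntil W N N0 P sc t i hv uv).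
Proof.
move=> Hn; rewrite /gauss_vec /gauss_iid => sk c usk.
pose kp := kap W N P sc t i hv uv.
pose SB := [seq (s, b) | s <- index_enum 'I_M, b <- [:: true; false]].
pose L := [seq (t, i, p.1, k, p.2) | k <- sk, p <- SB].
pose C := fun x : nat * 'I_K * 'I_M * 'I_m * bool =>
  let: (_, _, s, k, b) := x in c k * (if b then complex.Re (kp s) else - complex.Im (kp s)).
have uSB : uniq SB.
  apply: allpairs_uniq => //; first exact: index_enum_uniq.
  by move=> [s1 b1] [s2 b2] _ _ /= [-> ->].
have uL : uniq L.
  apply: allpairs_uniq => //.
  by move=> [k1 [s1 b1]] [k2 [s2 b2]] _ _ /= [-> -> ->].
apply: (is_normal_ext (Hn L C uL)).
- move=> w /=; rewrite big_allpairs_dep /=; apply: eq_bigr => k _.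
  rewrite big_allpairs_dep /= ntil_entry mulr_sumr; apply: eq_bigr => s _.
  rewrite !big_cons big_nil /= /C /kp; ring.
- rewrite big_allpairs_dep /=.
  rewrite (eq_bigr (fun k => c k ^+ 2 * \sum_(s : 'I_M) cabs2 (kp s))); last first.
    move=> k _; rewrite big_allpairs_dep /= mulr_sumr; apply: eq_bigr => s _.
    by rewrite !big_cons big_nil /= /C /cabs2; ring.
  rewrite -mulr_suml.
  case Esk: sk => [|k0 sk']; first by rewrite !big_nil mul0r !mulr0.
  have m0 : (0 < m)%N by apply: leq_ltn_trans (leq0n k0) (ltn_ord k0).
  by rewrite -(kap_norm m0) /kp; ring.
Qed.
End Part2.

Unset Implicit Arguments.

Theorem lemma5p1
  (R : realType) (K d m n : nat)
  (adj : rel 'I_K)                 (* communication graph G(V,E) *)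
  (W : 'M[R]_K)                    (* mixing matrix *)
  (H : 'M[R]_(m, d))               (* +-1 code matrix *)
  (N : nat) (N0 : R)               (* block length, noise power *)
  (P eta zeta : nat -> R)          (* powers, step sizes *)
  (sc : schedule K n.*2) :
  (* connected undirected simple graph *)
  irreflexive adj -> symmetric adj -> (forall i j, connect adj i j) ->
  (* symmetric doubly stochastic mixing matrix supported on the graph *)
  W^T = W -> (forall i j, 0 <= W i j) ->
  (forall i, \sum_(j < K) W i j = 1) -> (forall j, \sum_(i < K) W i j = 1) ->
  (forall i j, i != j -> ~~ adj i j -> W i j = 0) ->
  opnorm_lt1 (W - (K%:R)^-1 *: const_mx 1) ->
  (* random linear coding *)
  (m <= d)%N -> (forall k l, H k l = 1 \/ H k l = -1) ->
  (d%:R)^-1 *: (H *m H^T) = 1%:M ->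
  (* block of N = M m channel uses, M = 2n slots; noise power *)
  N = (n.*2 * m)%N -> 0 < N0 ->
  (* arbitrary step sizes and powers *)
  (forall t, 0 < eta t) -> (forall t, 0 <= zeta t) -> (forall t, 0 < P t) ->
  (* schedule *)
  schedule_ok adj sc ->
  (* gamma well defined: w_ji <> 0 for scheduled AirComp transmitters *)
  (forall j s i, s \in SAR sc j -> i \in Nsch sc j s -> W j i != 0) ->
  exists ntil : nat -> 'I_K -> ('I_K -> 'I_K -> R[i]) -> ('I_K -> 'cV[R]_d) ->
                ('I_K -> 'I_(n.*2) -> 'cV[R[i]]_m) -> 'cV[R]_m,
    (* (1) the consensus update, for every realization *)
    (forall (Rsign : nat -> 'I_d -> R)
            (grad : nat -> 'I_K -> 'cV[R]_d -> 'cV[R]_d)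
            (h : nat -> 'I_K -> 'I_K -> R[i])
            (nz : nat -> 'I_K -> 'I_(n.*2) -> 'cV[R[i]]_m)
            (theta0 : 'I_K -> 'cV[R]_d),
       (forall t k, Rsign t k = 1 \/ Rsign t k = -1) ->
       (forall t i j, adj i j -> h t i j != 0) ->
       (forall t i j, h t i j = h t j i) ->
       let A := codemx H Rsign in
       let u := uvec W A N P eta zeta grad h nz sc theta0 in
       (* gamma, alpha well defined along the trajectory *)
       (forall t j s i, s \in SAR sc j -> i \in Nsch sc j s -> u t i != 0) ->
       (forall t j s, s \in SBR sc j -> u t (bcast sc j s) != 0) ->
       forall (t : nat) (i : 'I_K),
         theta W A N P eta zeta grad h nz sc theta0 t.+1 i =
           thalf W A N P eta zeta grad h nz sc theta0 t i
           + zeta t *: \sum_(j | adj i j || (j == i))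
                W i j *: (thetahat W A N P eta zeta grad h nz sc theta0 t.+1 j
                          - thetahat W A N P eta zeta grad h nz sc theta0 t.+1 i)
           + zeta t *: \sum_(tau < t.+1)
                (mdr R m d *: ((A tau)^T *m ntil tau i (h tau) (u tau) (nz tau))))
    /\
    (* (2) conditionally on fading values hv and vectors uv, the effective
       noise is N(0, Ntil I_m) *)
    (forall (dT : measure_display) (T : measurableType dT)
            (Pr : probability T R)
            (nzr : T -> nat -> 'I_K -> 'I_(n.*2) -> 'cV[R[i]]_m),
       noise_iid Pr nzr N0 ->
       forall (t : nat) (i : 'I_K)
              (hv : 'I_K -> 'I_K -> R[i]) (uv : 'I_K -> 'cV[R]_d),
         (forall j k, adj j k -> hv j k != 0) ->
         (forall j k, hv j k = hv k j) ->
         (forall s j, s \in SAR sc i -> j \in Nsch sc i s -> uv j != 0) ->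
         (forall s, s \in SBR sc i -> uv (bcast sc i s) != 0) ->
         gauss_vec Pr (fun w => ntil t i hv uv (nzr w t))
                   (Ntil W N N0 P sc t i hv uv)).
Proof.
move=> Hirr Hsy Hconn HWT HWpos Hrow Hcol HW0 Hop Hmd HH HHH HNdef HN0 Heta Hzeta HP Hsch HW.
case: Hsch => [Hd [Hodd1 [Hodd2 [HAR [HBR Hpart]]]]].
have Hs1 : forall i s j, s \in SAR sc i -> j \in Nsch sc i s -> adj i j.
  by move=> i s j sA; case: (HAR _ _ sA) => _ [] H1 _; exact: H1.
have Hs1' : forall i s j, s \in SAR sc i -> j \in Nsch sc i s -> s \in SAT sc j.
  by move=> i s j sA; case: (HAR _ _ sA) => _ [] _ H1; exact: H1.
have Hs1'' : forall i s, s \in SAR sc i -> exists j, j \in Nsch sc i s.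
  by move=> i s sA; case: (HAR _ _ sA) => /card_gt0P.
have Hs2 : forall i s, s \in SBR sc i -> adj i (bcast sc i s).
  by move=> i s sB; case: (HBR _ _ sB).
have Hs2' : forall i s, s \in SBR sc i -> s \in SBT sc (bcast sc i s).
  by move=> i s sB; case: (HBR _ _ sB).
have Hdisj : forall i s, s \in SAR sc i -> s \in SBR sc i -> False.
  move=> i s sA sB.
  have := Hodd1 i s; rewrite inE sA orbT => /(_ isT) /negP; apply.
  by apply: (Hodd2 i s); rewrite inE sB orbT.
have HN : forall s : 'I_(n.*2), (0 < m)%N -> (0 < N)%N.
  move=> s m0; rewrite HNdef muln_gt0 m0 andbT.
  exact: leq_ltn_trans (leq0n s) (ltn_ord s).
exists (fun t i hv uv nzv => ntilf W N P sc t i hv uv nzv); split.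
  move=> Rsign grad h nz theta0 _ Hh Hhs A u Hu1 Hu2 t i.
  exact: (theta_formula Hs1 Hs1' Hs1'' Hs2 Hs2' Hpart HW HN HP Hh Hhs Hu1 Hu2 Hirr Hrow HW0).
move=> dT T Pr nzr Hn t i hv uv Hadj Hs Hu1 Hu2.
exact: (gauss_part (adj := adj)).
Qed.
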